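(* Assume $d\ge1$. For $0\le i\le d-2$, $$a^*_i+a^*_{i+1}=d-\frac{r-s}{2}+\frac{(r-s)(r+s)(2d+r+s+2)}{2(2d-2i+r+s-2)(2d-2i+r+s+2)},$$ and $$a^*_{d-1}+a^*_d=d+\frac{(d-1)(r-s)}{r+s+4}.$$
   Context: Fix an integer $d\ge0$ and $r,s\in(-1,\infty)$. Write $(x)_i=x(x+1)\cdots(x+i-1)$, $(x)_0=1$. For $0\le i\le d$ put $\theta^*_i=i$. Put $b^*_i=\frac{(d-i)(i-d-s)(2d-2i+r+s+2)_i}{(2d-2i+r+s)_{i+1}}$ ($0\le i\le d-1$), $c^*_i=\frac{i(i-d-r-1)(d-i+r+s+1)_{d-i}}{(d-i+r+s+2)_{d-i+1}}$ ($1\le i\le d$), $b^*_d=c^*_0=0$, and $a^*_i=\theta^*_0-b^*_i-c^*_i$ for $0\le i\le d$. *)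

(* Defs.v *)
From HB Require Import structures.
From mathcomp Require Import all_boot all_order all_algebra.
Set Implicit Arguments. Unset Strict Implicit. Unset Printing Implicit Defensive.
Import Order.TTheory GRing.Theory Num.Theory.
Local Open Scope ring_scope.

Definition poch {R : ringType} (x : R) (i : nat) : R :=
  \prod_(k < i) (x + k%:R).

Definition thetastar {R : ringType} (i : nat) : R := i%:R.

(* b*_i for 0 <= i <= d-1, and b*_d = 0 (values for i > d are irrelevant, set to 0). *)
Definition bstar {R : fieldType} (d : nat) (r s : R) (i : nat) : R :=
  if (i < d)%N then
    (d%:R - i%:R) * (i%:R - d%:R - s) * poch (2 * d%:R - 2 * i%:R + r + s + 2) i
    / poch (2 * d%:R - 2 * i%:R + r + s) i.+1
  else 0.

Definition cstar {R : fieldType} (d : nat) (r s : R) (i : nat) : R :=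
  if i == 0%N then 0 else
    i%:R * (i%:R - d%:R - r - 1) * poch (d%:R - i%:R + r + s + 1) (d - i)
    / poch (d%:R - i%:R + r + s + 2) (d - i).+1.

Definition astar {R : fieldType} (d : nat) (r s : R) (i : nat) : R :=
  thetastar 0 - bstar d r s i - cstar d r s i.

(* Main.v *)
Require Import Defs.
From HB Require Import structures.
From mathcomp Require Import all_boot all_order all_algebra.
From mathcomp Require Import ring lra.
Import Order.TTheory GRing.Theory Num.Theory.
Local Open Scope ring_scope.

Lemma pochSl (R : ringType) (x : R) n : poch x n.+1 = x * poch (x + 1) n.
Proof.
rewrite /poch big_ord_recl addr0; congr (_ * _).
apply: eq_bigr => k _; by rewrite lift0 /= mulrS addrA.
Qed.

Lemma pochSr (R : ringType) (x : R) n : poch x n.+1 = poch x n * (x + n%:R).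
Proof. by rewrite /poch big_ord_recr. Qed.

Lemma poch_gt0 (R : realFieldType) (x : R) n : 0 < x -> 0 < poch x n.
Proof.
move=> hx; rewrite /poch; apply: prodr_gt0 => k _.
by apply: ltr_wpDr => //; rewrite ler0n.
Qed.

Lemma bstarE (R : realFieldType) d (r s : R) i : -1 < r -> -1 < s -> (i < d)%N ->
  bstar d r s i = let x := 2 * d%:R - 2 * i%:R + r + s in
   (d%:R - i%:R) * (i%:R - d%:R - s) * (x + i%:R + 1) / (x * (x + 1)).
Proof.
move=> hr hs hi; rewrite /bstar hi /=.
set x := 2 * d%:R - 2 * i%:R + r + s.
have hdi : i%:R + 1 <= d%:R :> R by rewrite -[1]/(1%:R) -natrD ler_nat addn1.
have hx : 0 < x by rewrite /x; lra.
clearbody x.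
have e1 : poch x i.+1 * (x + i%:R + 1) = x * (x + 1) * poch (x + 2) i.
  rewrite pochSl -!mulrA; congr (_ * _).
  transitivity (poch (x+1) i * (x+1+i%:R)); first by rewrite [x + i%:R + 1]addrAC.
  by rewrite -pochSr pochSl -addrA.
have hp := @poch_gt0 _ x i.+1 hx.
have -> : poch (x + 2) i = poch x i.+1 * (x + i%:R + 1) / (x * (x + 1)).
  rewrite e1; field; apply/andP; split; lra.
field; rewrite -?andbA; apply/and3P; split; try lra.
Qed.

Lemma poch_id (R : comRingType) (y : R) m :
  poch y m * (y + m%:R) * (y + m%:R + 1) = y * poch (y + 1) m.+1.
Proof.
rewrite -pochSr pochSl -mulrA; congr (_ * _).
by rewrite pochSr; congr (_ * _); ring.
Qed.

Lemma cstarE (R : realFieldType) d (r s : R) i : -1 < r -> -1 < s -> (i < d)%N ->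
  cstar d r s i = let y := d%:R - i%:R + r + s + 1 in
   i%:R * (i%:R - d%:R - r - 1) * y / ((y + d%:R - i%:R) * (y + d%:R - i%:R + 1)).
Proof.
move=> hr hs hi; rewrite /cstar /=.
case: eqP => [->|_]; first by rewrite !mul0r.
set y := d%:R - i%:R + r + s + 1.
have hdi : i%:R + 1 <= d%:R :> R by rewrite -[1]/(1%:R) -natrD ler_nat addn1.
have hm : (d - i)%N%:R = d%:R - i%:R :> R by rewrite natrB // ltnW.
have hy : 0 < y + 1 by rewrite /y; lra.
have hp := @poch_gt0 _ (y + 1) (d - i).+1 hy.
have e := @poch_id _ y (d - i).
rewrite hm in e.
have hy2 : y + 1 = d%:R - i%:R + r + s + 2 by rewrite /y; ring.
rewrite -hy2.
clearbody y.
have -> : poch y (d - i) = y * poch (y + 1) (d - i).+1 / ((y + (d%:R - i%:R)) * (y + (d%:R - i%:R) + 1)).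
  rewrite -e; field; apply/andP; split; lra.
field; rewrite -?andbA; apply/and3P; split; lra.
Qed.

Lemma cstarEd (R : realFieldType) d (r s : R) : -1 < r -> -1 < s -> (0 < d)%N ->
  cstar d r s d = d%:R * (- r - 1) / (r + s + 2).
Proof.
move=> hr hs hd; rewrite /cstar; case: eqP => [h|_]; first by rewrite h in hd.
by rewrite subnn /poch big_ord0 big_ord1 /= !subrr sub0r !addr0 !add0r mulr1.
Qed.

Theorem lemma2p6 (R : realFieldType) (d : nat) (r s : R) :
  (1 <= d)%N -> -1 < r -> -1 < s ->
  (forall i : nat, (i.+2 <= d)%N ->
     astar d r s i + astar d r s i.+1 =
       d%:R - (r - s) / 2
       + (r - s) * (r + s) * (2 * d%:R + r + s + 2)
         / (2 * (2 * d%:R - 2 * i%:R + r + s - 2) * (2 * d%:R - 2 * i%:R + r + s + 2)))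
  /\
  astar d r s d.-1 + astar d r s d =
    d%:R + (d.-1)%:R * (r - s) / (r + s + 4).
Proof.
move=> hd hr hs; split.
  move=> i hi.
  have h1 : (i < d)%N by apply: ltn_trans hi.
  have h2 : (i.+1 < d)%N by [].
  rewrite /astar /thetastar !bstarE // !cstarE // /= -addn1 natrD.
  have hI : i%:R + 2 <= d%:R :> R by rewrite -[2]/(2%:R) -natrD ler_nat addn2.
  field; rewrite -?andbA; repeat (apply/andP; split); lra.
case: d hd => // n _ /=.
rewrite /astar /thetastar bstarE // cstarE // cstarEd // /bstar ltnn /= -addn1 natrD.
have hn : 0 <= n%:R :> R by rewrite ler0n.
field; rewrite -?andbA; repeat (apply/andP; split); lra.
Qed.
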